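(* Let $\boldsymbol Z$ be an integrable random vector in $\mathbb R^d$ whose distribution is invariant under all orthogonal transformations, and let $W$ be a discrete random variable jointly distributed with $\boldsymbol Z$. Then for every $w$ in the support of $W$ and every real $\theta$, $$\big\|\mathbb E(\boldsymbol Z\mathbf 1_{W=w})\big\|^2\le\big[\theta\,\mathbb P(W=w)+\mathbb E(Z_1-\theta)_+\big]^2,$$ where $Z_1$ is the first coordinate of $\boldsymbol Z$ and $x_+=\max(x,0)$. *)

(* Defs.v *)
From HB Require Import structures.
From mathcomp Require Import all_boot all_order all_algebra.
From mathcomp Require Import all_classical all_reals all_analysis.
Set Implicit Arguments. Unset Strict Implicit. Unset Printing Implicit Defensive.
Import Order.TTheory GRing.Theory Num.Theory.
Local Open Scope ring_scope.

Definition orthogonal_mx (R : realType) (d : nat) (Q : 'M[R]_d) : Prop :=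
  Q^T *m Q = 1%:M.

(* The linear action x |-> Q x of a matrix on vectors of R^d, where vectors of
   R^d are represented as d-tuples (which carry the product sigma-algebra). *)
Definition mx_act (R : realType) (d : nat) (Q : 'M[R]_d) (x : d.-tuple R)
  : d.-tuple R := [tuple \sum_(j < d) Q i j * tnth x j | i < d].

Definition enorm (R : realType) (d : nat) (x : d.-tuple R) : R :=
  Num.sqrt (\sum_(i < d) tnth x i ^+ 2).

(* Main.v *)
Require Import Defs.
From HB Require Import structures.
From mathcomp Require Import all_boot all_order all_algebra.
From mathcomp Require Import all_classical all_reals all_analysis.
From mathcomp Require Import measurable_realfun ring lra.
Import Order.TTheory GRing.Theory Num.Theory.
Local Open Scope classical_set_scope.
Local Open Scope ring_scope.
Lemma orth_first_row (R : realType) d (i0 : 'I_d) (u : 'I_d -> R) :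
  \sum_i u i ^+ 2 = 1 ->
  exists Q : 'M[R]_d, orthogonal_mx Q /\ forall j, Q i0 j = u j.
Proof.
move=> hu.
pose w : 'cV[R]_d := \col_i ((i == i0)%:R - u i).
pose n := \sum_i (w i 0) ^+ 2.
pose c := 2 / n.
pose M := w *m w^T.
have ME i j : M i j = w i 0 * w j 0.
  by rewrite /M mxE big_ord1 !mxE.
have hn : n = 2 * w i0 0.
  rewrite /n (bigD1 i0) //= !mxE eqxx.
  rewrite (eq_bigr (fun i => u i ^+ 2)); last first.
    by move=> i /negbTE hi; rewrite mxE hi sub0r sqrrN.
  move: hu; rewrite (bigD1 i0) //= => hu.
  have -> : \sum_(i | i != i0) u i ^+ 2 = 1 - u i0 ^+ 2.
    by rewrite -hu; ring.
  ring.
have key : c * (c * n) = 2 * c.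
  have [n0|n0] := eqVneq n 0.
    by rewrite /c n0 invr0 !mulr0.
  by rewrite /c; field.
have wtw : w^T *m w = n%:M.
  rewrite [LHS]mx11_scalar; congr (_%:M).
  by rewrite mxE /n; apply: eq_bigr => i _; rewrite !mxE expr2.
have MM : M *m M = n *: M.
  by rewrite /M mulmxA -(mulmxA w) wtw mul_mx_scalar scalemxAl.
exists (1%:M - c *: M); split.
  rewrite /orthogonal_mx.
  have -> : (1%:M - c *: M)^T = 1%:M - c *: M.
    by rewrite linearB linearZ /= trmx1 /M trmx_mul trmxK.
  rewrite mulmxBl !mulmxBr !mul1mx ?mulmx1 -!scalemxAl -!scalemxAr MM !scalerA.
  apply/matrixP => i j; rewrite !mxE.
  have key' : c * c * n = 2 * c by rewrite -mulrA key.
  rewrite key'; ring.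

have wE k : w k 0 = (k == i0)%:R - u k by rewrite mxE.
have nE : \sum_i w i 0 ^+ 2 = n by [].
have cE : c = 2 / n by [].
clearbody M c n w.
move=> j.
rewrite !mxE ME.
have uE : u j = (j == i0)%:R - w j 0 by rewrite wE; ring.
rewrite uE eq_sym.
have [a0|a0] := eqVneq (w i0 0) 0.
  have : forall k, w k 0 ^+ 2 = 0.
    move=> k; apply: (@psumr_eq0P _ _ predT (fun k => w k 0 ^+ 2)) => //.
      by move=> ? _; exact: sqr_ge0.
    by rewrite nE hn a0 mulr0.
  move=> /(_ j) /eqP; rewrite sqrf_eq0 => /eqP ->.
  by rewrite a0; ring.
have -> : c * (w i0 0 * w j 0) = w j 0.
  by rewrite cE hn mulrA; field.
by [].
Qed.
Lemma meas_mx_act (R : realType) d (Q : 'M[R]_d) : measurable_fun setT (mx_act Q).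
Proof.
apply/measurable_fun_tnthP => i.
have -> : (tnth (T:=R))^~ i \o mx_act Q = (fun x => \sum_(j < d) Q i j * tnth x j).
  by apply/funext => x; rewrite /comp /mx_act tnth_mktuple.
apply: measurable_sum => j; apply: measurable_funM => //; exact: measurable_tnth.
Qed.

Lemma tnth_le_enorm (R : realType) d (x : d.-tuple R) i : `|tnth x i| <= enorm x.
Proof.
rewrite /enorm -sqrtr_sqr ler_wsqrtr // (bigD1 i) //= ler_wpDr //.
by apply: sumr_ge0 => j _; exact: sqr_ge0.
Qed.

Lemma enorm_ge0 (R : realType) d (x : d.-tuple R) : 0 <= enorm x.
Proof. exact: sqrtr_ge0. Qed.

Section helpers.
Context dT (T : measurableType dT) (R : realType) (P : probability T R).

Lemma Rint_sum (I : Type) (r : seq I) (F : I -> T -> R) :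
  (forall i, P.-integrable setT (EFin \o F i)) ->
  P.-integrable setT (EFin \o (fun x => \sum_(i <- r) F i x)) /\
  \int[P]_x (\sum_(i <- r) F i x) = \sum_(i <- r) \int[P]_x F i x.
Proof.
move=> hF; elim: r => [|a r [ir IH]].
  split.
    have -> : EFin \o (fun x => \sum_(i <- [::]) F i x) = EFin \o cst 0.
      by apply/funext => x; rewrite /comp big_nil.
    exact: finite_measure_integrable_cst.
  under eq_Rintegral do rewrite big_nil.
  by rewrite Rintegral_cst // mul0r big_nil.
split.
  have -> : EFin \o (fun x => \sum_(i <- a :: r) F i x) =
      ((EFin \o F a) \+ (EFin \o (fun x => (\sum_(i <- r) F i x)%R)))%E.
    by apply/funext => x; rewrite /comp big_cons.
  exact: integrableD.
under eq_Rintegral do rewrite big_cons.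
by rewrite RintegralD // IH big_cons.
Qed.

Lemma intdom (Z : T -> R) (f : T -> R) (K : R) : measurable_fun setT f ->
  P.-integrable setT (EFin \o Z) ->
  (forall x, `|f x| <= K * Z x + K) -> P.-integrable setT (EFin \o f).
Proof.
move=> mf iZ hf.
apply: (@le_integrable _ _ _ _ _ _ _ (EFin \o (fun x => K * Z x + K))) => //.
- exact/measurable_EFinP.
- move=> x _; rewrite /comp !abse_EFin lee_fin; apply: le_trans (hf x) _.
  exact: ler_norm.
- have -> : EFin \o (fun x => K * Z x + K) =
      ((fun x => K%:E * (EFin \o Z) x)%E \+ (EFin \o cst K))%E.
    by apply/funext => x.
  apply: integrableD => //; last exact: finite_measure_integrable_cst.
  exact: integrableZl.
Qed.
End helpers.

Theorem mainTheorem13 (dT : measure_display) (T : measurableType dT)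
  (R : realType) (P : probability T R) (d : nat) (hd : (0 < d)%N)
  (Z : T -> d.-tuple R) (W : T -> R)
  (mZ : measurable_fun setT Z)
  (intZ : P.-integrable setT (fun x => (enorm (Z x))%:E))
  (invZ : forall Q : 'M[R]_d, orthogonal_mx Q ->
     forall A : set (d.-tuple R), measurable A ->
       P (Z @^-1` A) = P ((mx_act Q \o Z) @^-1` A))
  (mW : measurable_fun setT W) (discW : countable (range W))
  (w : R) (hw : (0 < P (W @^-1` [set w]))%E) (theta : R) :
  \sum_(i < d) (fine ('E_P[fun x => tnth (Z x) i * (W x == w)%:R])) ^+ 2
  <= (theta * fine (P (W @^-1` [set w]))
      + fine ('E_P[fun x => Num.max (tnth (Z x) (Ordinal hd) - theta) 0])) ^+ 2.
Proof.
set i0 := Ordinal hd.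
set A := W @^-1` [set w].
have mA : measurable A by rewrite -[A]setTI; apply: mW => //; exact: measurable_set1.
pose ind := fun x => (W x == w)%:R : R.
have indE : ind = \1_A :> (T -> R).
  apply/funext => x; rewrite indicE /ind.
  have [h|h] := eqVneq (W x) w; first by rewrite mem_set.
  by rewrite memNset // => e; move: h; rewrite e eqxx.
have mind : measurable_fun setT ind by rewrite indE; exact: measurable_indic.
have ind01 x : 0 <= ind x <= 1 by rewrite /ind; case: (_ == _); rewrite /= ?lexx ?ler01.
have nind x : `|ind x| <= 1.
  by have /andP[h0 h1] := ind01 x; rewrite ger0_norm.
have mZi i : measurable_fun setT (fun x => tnth (Z x) i).
  exact: measurableT_comp (measurable_tnth i) mZ.
have intZ' : P.-integrable setT (EFin \o (fun x => enorm (Z x))) by exact: intZ.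
have e0 x : 0 <= enorm (Z x) by exact: enorm_ge0.
set v := fun i => \int[P]_x (tnth (Z x) i * ind x).
have -> : \sum_(i < d) (fine ('E_P[fun x => tnth (Z x) i * (W x == w)%:R])) ^+ 2
    = \sum_(i < d) v i ^+ 2 by apply: eq_bigr => i _; rewrite unlock.
have pE : fine (P A) = \int[P]_x ind x.
  rewrite indE /Rintegral integral_indic // setIT //.
set pmax := fine ('E_P[_]).
set S := \sum_(i < d) v i ^+ 2.
have S0 : 0 <= S by apply: sumr_ge0 => i _; exact: sqr_ge0.
set s := Num.sqrt S.
have sS : S = s ^+ 2 by rewrite sqr_sqrtr.
have [s0|s0] := eqVneq s 0.
  by rewrite sS s0 expr2 mul0r sqr_ge0.
have spos : 0 < s by rewrite lt_def s0 sqrtr_ge0.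
pose u i := v i / s.
have hu : \sum_i u i ^+ 2 = 1.
  rewrite /u; under eq_bigr do rewrite expr_div_n.
  by rewrite -mulr_suml -/S sS divff // expf_neq0.
have [Q [oQ hQ]] := @orth_first_row R d i0 u hu.
pose X := fun x => \sum_j u j * tnth (Z x) j.
have XE x : X x = tnth (mx_act Q (Z x)) i0.
  by rewrite /mx_act tnth_mktuple; apply: eq_bigr => j _; rewrite hQ.
pose K := \sum_j `|u j|.
have K0 : 0 <= K by apply: sumr_ge0 => j _.
have hX x : `|X x| <= K * enorm (Z x).
  rewrite /X /K mulr_suml; apply: le_trans (ler_norm_sum _ _ _) _.
  apply: ler_sum => j _; rewrite normrM ler_wpM2l //; exact: tnth_le_enorm.
have mX : measurable_fun setT X.
  by apply: measurable_sum => j; apply: measurable_funM => //.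
have intuf i : P.-integrable setT
    (EFin \o (fun x => u i * (tnth (Z x) i * ind x))).
  apply: (@intdom _ _ _ _ (fun x => enorm (Z x)) _ `|u i|) => //.
    by apply: measurable_funM => //; apply: measurable_funM.
  move=> x; rewrite !normrM; apply: ler_wpDr => //.
  rewrite ler_wpM2l // -[X in _ <= X]mulr1 ler_pM //; exact: tnth_le_enorm.
have intf i : P.-integrable setT (EFin \o (fun x => tnth (Z x) i * ind x)).
  apply: (@intdom _ _ _ _ (fun x => enorm (Z x)) _ 1) => //.
    by apply: measurable_funM.
  move=> x; rewrite normrM mul1r; apply: ler_wpDr => //.
  rewrite -[X in _ <= X]mulr1 ler_pM //; exact: tnth_le_enorm.
have intXi : P.-integrable setT (EFin \o (fun x => X x * ind x)).
  apply: (@intdom _ _ _ _ (fun x => enorm (Z x)) _ K) => //.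
    by apply: measurable_funM.
  move=> x; rewrite normrM; apply: ler_wpDr => //.
  rewrite -[X in _ <= X]mulr1 ler_pM //.
have mmax : measurable_fun setT (fun x => Num.max (X x - theta) 0).
  by apply: measurable_maxr => //; apply: measurable_funB.
have hmax x : 0 <= Num.max (X x - theta) 0 <= `|X x| + `|theta|.
  rewrite le_max lexx orbT /= ge_max addr_ge0 // andbT.
  apply: le_trans (ler_norm _) _; exact: ler_normB.
have intmax : P.-integrable setT (EFin \o (fun x => Num.max (X x - theta) 0)).
  apply: (@intdom _ _ _ _ (fun x => enorm (Z x)) _ (K + `|theta|)) => //.
  move=> x; have /andP[h0 h1] := hmax x; have := hX x.
  have := e0 x; rewrite (ger0_norm h0).
  have : 0 <= `|theta| * enorm (Z x) by rewrite mulr_ge0.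
  rewrite mulrDl; lra.
have intti : P.-integrable setT (EFin \o (fun x => theta * ind x)).
  apply: (@intdom _ _ _ _ (fun x => enorm (Z x)) _ `|theta|) => //.
    by apply: measurable_funM.
  move=> x; rewrite normrM; apply: ler_wpDl; first by rewrite mulr_ge0.
  by rewrite -[X in _ <= X]mulr1 ler_wpM2l.
have step1 : s = \int[P]_x (X x * ind x).
  have -> : s = \sum_i u i * v i.
    rewrite /u; under eq_bigr do rewrite mulrAC -expr2.
    by rewrite -mulr_suml -/S sS expr2 mulfK.
  under eq_bigr do rewrite /v -RintegralZl //.
  rewrite -(@Rint_sum _ _ _ P _ (index_enum _) _ intuf).2.
  apply: eq_Rintegral => x _; rewrite /X mulr_suml; apply: eq_bigr => i _.
  by rewrite mulrA.
have intind : P.-integrable setT (EFin \o ind).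
  apply: (@intdom _ _ _ _ (fun x => enorm (Z x)) _ 1) => //.
  by move=> x; rewrite mul1r; apply: ler_wpDl.
have step2 : \int[P]_x (X x * ind x) <=
    \int[P]_x (theta * ind x + Num.max (X x - theta) 0).
  apply: le_Rintegral => //.
    have -> : EFin \o (fun x => theta * ind x + Num.max (X x - theta) 0) =
      ((EFin \o (fun x => (theta * ind x)%R)) \+
        (EFin \o (fun x => (Num.max (X x - theta) 0)%R)))%E by apply/funext.
    exact: integrableD.
  move=> x _; have /andP[h0 _] := hmax x.
  have h2 : X x - theta <= Num.max (X x - theta) 0 by rewrite le_max lexx.
  rewrite /ind; case: (_ == _) => /=; rewrite ?mulr1 ?mulr0 ?add0r //.
  lra.
have step3 : \int[P]_x (theta * ind x + Num.max (X x - theta) 0) =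
    theta * fine (P A) + \int[P]_x (Num.max (X x - theta) 0).
  by rewrite RintegralD // RintegralZl // -pE.
have step4 : \int[P]_x (Num.max (X x - theta) 0) = pmax.
  rewrite /pmax unlock /Rintegral; congr fine.
  pose G := fun y : d.-tuple R => (Num.max (tnth y i0 - theta) 0)%:E.
  have mG : measurable_fun setT G.
    apply/measurable_EFinP; apply: measurable_maxr => //.
    by apply: measurable_funB => //; exact: measurable_tnth.
  have G0 : {in setT, forall y, (0 <= G y)%E}.
    by move=> y _; rewrite /G lee_fin le_max lexx orbT.
  have mQZ : measurable_fun setT (mx_act Q \o Z).
    apply: measurableT_comp mZ; exact: meas_mx_act.
  have h1 := ge0_integral_pushforward mQZ P measurableT mG G0.
  have h2 := ge0_integral_pushforward mZ P measurableT mG G0.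
  rewrite preimage_setT in h1 h2.
  transitivity (\int[P]_(x in setT) (G \o (mx_act Q \o Z)) x)%E.
    by apply: eq_integral => x _; rewrite /comp /G -XE.
  rewrite -h1.
  transitivity (\int[P]_(x in setT) (G \o Z) x)%E; last by [].
  rewrite -h2; apply: eq_measure_integral => B mB _ /=.
  by rewrite /pushforward (invZ Q oQ B mB).
have sB : s <= theta * fine (P A) + pmax.
  by rewrite step1 -step4 -step3.
rewrite sS !expr2; apply: ler_pM => //; exact: ltW.
Qed.
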